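(* Let $x,y$ be non-commuting indeterminates and let $C=xyx^{-1}y^{-1}$. Let $(R_n)_{n\in\mathbb Z}$ be the unique solution of $$R_{n+1}CR_{n-1}=R_n^2+1\qquad(n\in\mathbb Z)$$ with $R_0=yxy^{-1}$ and $R_1=y$. Then for every $n\in\mathbb Z$, $R_n$ is a Laurent polynomial in $x,y$ whose coefficients all lie in $\{0,1\}$. Moreover, let $n\ge 0$ and set $$y_1=R_1R_0^{-1}=y^2x^{-1}y^{-1},\qquad y_2=R_1^{-1}R_0^{-1}=x^{-1}y^{-1},\qquad y_3=R_1^{-1}R_0=xy^{-1}.$$ Consider paths on $\{0,1,2,3\}$ with $2n$ steps of the form $i\to i\pm1$ that start and end at $0$. The weight of such a path is the product, from left to right in the order the steps are taken, of $1$ for each step $i\to i+1$ and $y_i$ for each step $i\to i-1$. Then each Laurent monomial appearing in $R_nR_0^{-1}$ is the weight of exactly one such path.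
   Context: Work in the free skew field (non-commutative rational functions) over $\mathbb C$ generated by $x,y$. A Laurent polynomial in $x,y$ is a $\mathbb Z$-linear combination of words (Laurent monomials) in $x^{\pm1},y^{\pm1}$. Its coefficients are those of its expansion in reduced words. *)

(* Defs.v *)
(* Integral group ring Z[F_2] of the free group on x, y,
   i.e. non-commutative Laurent polynomials in x, y. *)
From HB Require Import structures.
From mathcomp Require Import all_boot all_order all_algebra.
Set Implicit Arguments. Unset Strict Implicit. Unset Printing Implicit Defensive.
Import Order.TTheory GRing.Theory Num.Theory.
Local Open Scope ring_scope.

(* A letter is (is_y, is_inverse): x = (false,false), x^-1 = (false,true),
   y = (true,false), y^-1 = (true,true). *)
Definition letter := (bool * bool)%type.
Definition word := seq letter.

Definition Lx : letter := (false, false).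
Definition Lxi : letter := (false, true).
Definition Ly : letter := (true, false).
Definition Lyi : letter := (true, true).

Definition linv (a : letter) : letter := (a.1, ~~ a.2).

Definition reduce (w : word) : word :=
  foldr (fun a s => match s with
                    | b :: s' => if b == linv a then s' else a :: s
                    | [::] => [:: a]
                    end) [::] w.

(* A Laurent polynomial is represented by a formal Z-linear combination of
   (possibly non-reduced) words; its coefficients are those of its expansion
   in reduced words. *)
Definition lpoly := seq (int * word)%type.

Definition coef (p : lpoly) (w : word) : int :=
  \sum_(t <- p | reduce t.2 == w) t.1.

Definition lpeq (p q : lpoly) : Prop := forall w, coef p w = coef q w.

Definition ladd (p q : lpoly) : lpoly := p ++ q.
Definition lmul (p q : lpoly) : lpoly :=
  [seq (a.1 * b.1, a.2 ++ b.2) | a <- p, b <- q].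
Definition lmono (w : word) : lpoly := [:: (1, w)].
Definition lone : lpoly := lmono [::].

Definition wC : word := [:: Lx; Ly; Lxi; Lyi].
Definition wR0 : word := [:: Ly; Lx; Lyi].
Definition wR1 : word := [:: Ly].
Definition wR0inv : word := [:: Ly; Lxi; Lyi].
Definition wy1 : word := [:: Ly; Ly; Lxi; Lyi].
Definition wy2 : word := [:: Lxi; Lyi].
Definition wy3 : word := [:: Lx; Lyi].

Definition ywt (i : nat) : word :=
  match i with 1 => wy1 | 2 => wy2 | 3 => wy3 | _ => [::] end.

(* A path is a list of steps (true = up i -> i+1, false = down i -> i-1).
   pathw h p = Some (weight) if the path starting at height h stays in
   {0,1,2,3} and ends at 0; the weight is the left-to-right product of
   1 for an up step and y_i for a down step i -> i-1. *)
Fixpoint pathw (h : nat) (p : seq bool) : option word :=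
  match p with
  | [::] => if h == 0%N then Some [::] else None
  | true :: p' => if (h < 3)%N then pathw h.+1 p' else None
  | false :: p' =>
      if h == 0%N then None
      else match pathw h.-1 p' with
           | Some u => Some (ywt h ++ u)
           | None => None
           end
  end.

(* Main.v *)
Require Import Defs.
From HB Require Import structures.
From mathcomp Require Import all_boot all_order all_algebra zify.
Set Implicit Arguments. Unset Strict Implicit. Unset Printing Implicit Defensive.
Import Order.TTheory GRing.Theory Num.Theory.
Local Open Scope ring_scope.

Definition stp (a : letter) (s : word) : word :=
  match s with
  | b :: s' => if b == linv a then s' else a :: s
  | [::] => [:: a]
  end.

Lemma reduce_cons a w : reduce (a :: w) = stp a (reduce w).
Proof. by []. Qed.

Definition nadj (a b : letter) := b != linv a.
Definition redw (w : word) := sorted nadj w.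

Lemma linvK a : linv (linv a) = a.
Proof. by case: a => [[] []]. Qed.

Lemma linv_eq a b : (linv a == b) = (a == linv b).
Proof. by case: a => [[] []]; case: b => [[] []]. Qed.

Lemma stp_red a s : redw s -> redw (stp a s).
Proof.
case: s => [|b s] //= Hs.
case: ifP => Hb; first by move: Hs; case: s => //= c s /andP [].
by rewrite /= /nadj Hb Hs.
Qed.

Lemma reduce_red w : redw (reduce w).
Proof. by elim: w => [|a w IH] //=; apply: stp_red. Qed.

Lemma reduce_id w : redw w -> reduce w = w.
Proof.
elim: w => [|a w IH] //= Hw.
have Hw' : redw w by move: Hw; case: w {IH} => //= b w /andP [].
rewrite IH //; case: w Hw Hw' {IH} => [|b w] //= /andP [Hb _] _.
by rewrite /nadj in Hb; rewrite (negbTE Hb).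
Qed.

Lemma reduceK w : reduce (reduce w) = reduce w.
Proof. exact/reduce_id/reduce_red. Qed.

Lemma stp_cancel a t : redw t -> stp a (stp (linv a) t) = t.
Proof.
case: t => [|b t] /=; first by rewrite eqxx.
move=> Ht; case: ifP => Hb.
  move/eqP: Hb => Hb; subst b; rewrite linvK.
  case: t Ht => [|c t] /=; first by [].
  move=> /andP [Hc _]; rewrite /nadj linvK in Hc; rewrite (negbTE Hc) //.
by rewrite /= eqxx.
Qed.

Lemma reduce_cat u v : reduce (u ++ v) = foldr stp (reduce v) u.
Proof. by rewrite /reduce foldr_cat. Qed.

Lemma foldr_stp_red s u : redw s -> redw (foldr stp s u).
Proof. by move=> Hs; elim: u => [|a u IH] //=; apply: stp_red. Qed.

Lemma reduce_catr u v : reduce (u ++ reduce v) = reduce (u ++ v).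
Proof. by rewrite !reduce_cat reduceK. Qed.

Lemma foldr_stp_reduce s u : redw s -> foldr stp s (reduce u) = foldr stp s u.
Proof.
move=> Hs; elim: u => [|a u IH] //=.
rewrite -IH; set r := reduce u.
have Hr : redw r by apply: reduce_red.
case: r Hr {IH} => [|b r] //= Hr.
case: ifP => Hb //.
move/eqP: Hb => ->.
rewrite stp_cancel //.
by apply: foldr_stp_red.
Qed.

Lemma reduce_catl u v : reduce (reduce u ++ v) = reduce (u ++ v).
Proof. by rewrite !reduce_cat foldr_stp_reduce // reduce_red. Qed.

Lemma reduce_cancel u a v : reduce (u ++ a :: linv a :: v) = reduce (u ++ v).
Proof.
rewrite !reduce_cat !reduce_cons stp_cancel //; exact: reduce_red.
Qed.

Lemma reduce_cancel' u a v : reduce (u ++ linv a :: a :: v) = reduce (u ++ v).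
Proof. by have := reduce_cancel u (linv a) v; rewrite linvK. Qed.

Definition winv (w : word) : word := rev (map linv w).

Lemma winv_cons a w : winv (a :: w) = winv w ++ [:: linv a].
Proof. by rewrite /winv map_cons rev_cons cats1. Qed.

Lemma winvK w : winv (winv w) = w.
Proof. by rewrite /winv map_rev revK -map_comp (eq_map linvK) map_id. Qed.

Lemma reduce_invl u v : reduce (winv u ++ u ++ v) = reduce v.
Proof.
elim: u v => [|a u IH] v //=.
rewrite winv_cons -catA /= reduce_cancel'; exact: IH.
Qed.

Lemma reduce_invr u v : reduce (u ++ winv u ++ v) = reduce v.
Proof. by rewrite -{1}(winvK u) reduce_invl. Qed.

Lemma reduce_invl0 u : reduce (winv u ++ u) = [::].
Proof. by have := reduce_invl u [::]; rewrite cats0. Qed.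
Lemma coef_nil w : coef [::] w = 0.
Proof. by rewrite /coef big_nil. Qed.

Lemma coef_cons t p w :
  coef (t :: p) w = (if reduce t.2 == w then t.1 else 0) + coef p w.
Proof. by rewrite /coef big_cons; case: ifP => //; rewrite add0r. Qed.

Lemma coef_cat p q w : coef (p ++ q) w = coef p w + coef q w.
Proof. by rewrite /coef big_cat. Qed.

Lemma coef_notred p w : ~~ redw w -> coef p w = 0.
Proof.
move=> Hw; rewrite /coef big1 // => t /eqP Ht.
by move: Hw; rewrite -Ht reduce_red.
Qed.

Definition supp (p : lpoly) := [seq reduce t.2 | t <- p].

Lemma coef_supp p w : w \notin supp p -> coef p w = 0.
Proof.
elim: p => [|t p IH]; first by rewrite coef_nil.
rewrite /= in_cons negb_or => /andP [H1 H2].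
rewrite coef_cons IH // addr0; case: eqP => // E.
by move: H1; rewrite E eqxx.
Qed.

Definition psum (p : lpoly) (f : word -> int) : int :=
  \sum_(t <- p) t.1 * f (reduce t.2).

Lemma sum_delta (L : seq word) x (g : word -> int) :
  uniq L -> x \in L -> \sum_(u <- L) (if x == u then g u else 0) = g x.
Proof.
move=> UL xL; rewrite (big_rem x xL) /= eqxx big1_seq ?addr0 //.
move=> u /andP [_ uL]; case: eqP => // E; subst u.
by move: (mem_rem_uniqF x UL); rewrite uL.
Qed.

Lemma psum_L p f L : uniq L -> {subset supp p <= L} ->
  psum p f = \sum_(u <- L) coef p u * f u.
Proof.
move=> UL; elim: p => [|t p IH] Hs.
  by rewrite /psum big_nil big1 // => u _; rewrite coef_nil mul0r.
rewrite /psum big_cons -/(psum p f) IH; last by move=> u Hu; apply: Hs; rewrite /= in_cons Hu orbT.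
have Ht : reduce t.2 \in L by apply: Hs; rewrite /= in_cons eqxx.
rewrite [in RHS](eq_bigr (fun u => (if reduce t.2 == u then t.1 else 0) * f u + coef p u * f u)); last by move=> u _; rewrite coef_cons mulrDl.
rewrite big_split /=; congr (_ + _).
rewrite -(sum_delta (fun u => t.1 * f u) UL Ht).
by apply: eq_bigr => u _; case: ifP => _; rewrite ?mul0r.
Qed.

Lemma psum_eq p q f : lpeq p q -> psum p f = psum q f.
Proof.
move=> E; set L := undup (supp p ++ supp q).
have UL : uniq L by apply: undup_uniq.
rewrite (@psum_L p f L UL); last by move=> u Hu; rewrite mem_undup mem_cat Hu.
rewrite (@psum_L q f L UL); last by move=> u Hu; rewrite mem_undup mem_cat Hu orbT.
by apply: eq_bigr => u _; rewrite E.
Qed.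

Lemma coef_psum p w : coef p w = psum p (fun u => if u == w then 1 else 0).
Proof.
rewrite /coef /psum big_mkcond; apply: eq_bigr => t _.
by case: ifP; rewrite ?mulr1 ?mulr0.
Qed.

Lemma coef_lmul p q w : coef (lmul p q) w =
  \sum_(a <- p) \sum_(b <- q) (if reduce (a.2 ++ b.2) == w then a.1 * b.1 else 0).
Proof. by rewrite /coef big_mkcond /lmul big_allpairs_dep. Qed.

Lemma lpeq_refl p : lpeq p p. Proof. by []. Qed.
Lemma lpeq_sym p q : lpeq p q -> lpeq q p. Proof. by move=> E w; rewrite E. Qed.
Lemma lpeq_trans p q r : lpeq p q -> lpeq q r -> lpeq p r.
Proof. by move=> E1 E2 w; rewrite E1 E2. Qed.

Lemma ladd_congr p p' q q' : lpeq p p' -> lpeq q q' -> lpeq (ladd p q) (ladd p' q').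
Proof. by move=> E1 E2 w; rewrite /ladd !coef_cat E1 E2. Qed.

Lemma lmul_congr_r p q q' : lpeq q q' -> lpeq (lmul p q) (lmul p q').
Proof.
move=> E w; rewrite !coef_lmul; apply: eq_bigr => a _.
have H r : \sum_(b <- r) (if reduce (a.2 ++ b.2) == w then a.1 * b.1 else 0)
   = a.1 * psum r (fun v => if reduce (a.2 ++ v) == w then 1 else 0).
  rewrite /psum mulr_sumr; apply: eq_bigr => b _.
  by rewrite reduce_catr; case: ifP; rewrite ?mulr1 ?mulr0.
by rewrite !H (psum_eq _ E).
Qed.

Lemma lmul_congr_l p p' q : lpeq p p' -> lpeq (lmul p q) (lmul p' q).
Proof.
move=> E w; rewrite !coef_lmul exchange_big [RHS]exchange_big.
apply: eq_bigr => b _.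
have H r : \sum_(a <- r) (if reduce (a.2 ++ b.2) == w then a.1 * b.1 else 0)
   = psum r (fun v => if reduce (v ++ b.2) == w then 1 else 0) * b.1.
  rewrite /psum mulr_suml; apply: eq_bigr => a _.
  by rewrite reduce_catl; case: ifP; rewrite ?mulr1 ?mulr0 ?mul0r.
by rewrite !H (psum_eq _ E).
Qed.

Lemma lmul_congr p p' q q' : lpeq p p' -> lpeq q q' -> lpeq (lmul p q) (lmul p' q').
Proof. move=> E1 E2; exact: lpeq_trans (lmul_congr_l _ E1) (lmul_congr_r _ E2). Qed.

Lemma lmul_assoc p q r : lpeq (lmul (lmul p q) r) (lmul p (lmul q r)).
Proof.
move=> w; rewrite !coef_lmul /lmul big_allpairs_dep; apply: eq_bigr => a _.
rewrite big_allpairs_dep; apply: eq_bigr => b _.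
by apply: eq_bigr => c _; rewrite /= catA mulrA.
Qed.

Lemma lmul_addl p q r : lpeq (lmul (ladd p q) r) (ladd (lmul p r) (lmul q r)).
Proof. by move=> w; rewrite /ladd coef_cat !coef_lmul big_cat. Qed.

Lemma lmul_addr p q r : lpeq (lmul p (ladd q r)) (ladd (lmul p q) (lmul p r)).
Proof.
move=> w; rewrite /ladd coef_cat !coef_lmul -big_split; apply: eq_bigr => a _.
by rewrite big_cat.
Qed.

Lemma lmul1 p : lpeq (lmul lone p) p.
Proof.
move=> w; rewrite coef_lmul big_cons big_nil addr0 /coef [RHS]big_mkcond.
by apply: eq_bigr => b _; rewrite /= mul1r.
Qed.

Lemma lmulr1 p : lpeq (lmul p lone) p.
Proof.
move=> w; rewrite coef_lmul /coef [RHS]big_mkcond.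
by apply: eq_bigr => b _; rewrite big_cons big_nil addr0 /= cats0 mulr1.
Qed.

Definition lneg (p : lpoly) : lpoly := [seq (- t.1, t.2) | t <- p].

Lemma coef_lneg p w : coef (lneg p) w = - coef p w.
Proof.
elim: p => [|t p IH]; first by rewrite coef_nil oppr0.
by rewrite /= !coef_cons IH opprD; case: ifP => //; rewrite oppr0.
Qed.
Definition leW (u v : word) := (pickle u <= pickle v)%N.

Lemma leW_total : total leW.
Proof. by move=> u v; rewrite /leW leq_total. Qed.
Lemma leW_trans : transitive leW.
Proof. by move=> u v w; rewrite /leW; apply: leq_trans. Qed.
Lemma leW_anti : antisymmetric leW.
Proof. by move=> u v /anti_leq /(pcan_inj pickleK_inv). Qed.

Definition nsupp (p : lpoly) : seq word :=
  sort leW [seq w <- undup (supp p) | coef p w != 0].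

Lemma mem_nsupp p w : (w \in nsupp p) = (coef p w != 0).
Proof.
rewrite /nsupp mem_sort mem_filter mem_undup.
case: (boolP (coef p w != 0)) => H //=.
apply/negPn/negP => Hs; by move: H; rewrite coef_supp // eqxx.
Qed.

Lemma uniq_nsupp p : uniq (nsupp p).
Proof. by rewrite /nsupp sort_uniq filter_uniq // undup_uniq. Qed.

Lemma nsupp_eq p q : lpeq p q -> nsupp p = nsupp q.
Proof.
move=> E; apply/(perm_sortP leW_total leW_trans leW_anti).
apply: uniq_perm; rewrite ?filter_uniq ?undup_uniq // => w.
by have := mem_nsupp p w; have := mem_nsupp q w; rewrite /nsupp !mem_sort E => -> ->.
Qed.

Definition norm (p : lpoly) : lpoly := [seq (coef p w, w) | w <- nsupp p].

Lemma norm_eq p q : lpeq p q -> norm p = norm q.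
Proof. by move=> E; rewrite /norm (nsupp_eq E); apply: eq_map => w; rewrite E. Qed.

Lemma nsupp_red p w : w \in nsupp p -> reduce w = w.
Proof.
rewrite /nsupp mem_sort mem_filter mem_undup => /andP [_ /mapP [t _ ->]].
exact: reduceK.
Qed.

Lemma coef_norm p : lpeq (norm p) p.
Proof.
move=> w; rewrite /norm /coef big_map big_mkcond /=.
rewrite (eq_big_seq (fun u => if u == w then coef p u else 0)); last first.
  by move=> u Hu; rewrite (nsupp_red Hu).
case: (boolP (w \in nsupp p)) => Hw.
  rewrite (big_rem w Hw) /= eqxx big1_seq ?addr0 //.
  move=> u /andP [_ uL]; case: eqP => // E; subst u.
  by move: (mem_rem_uniqF w (uniq_nsupp p)); rewrite uL.
rewrite big1_seq; last by move=> u /andP [_ Hu]; case: eqP => // E; subst u; rewrite Hu in Hw.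
by move: Hw; rewrite mem_nsupp negbK => /eqP; rewrite /coef => ->.
Qed.

Lemma norm_idem p : norm (norm p) == norm p.
Proof. by apply/eqP/norm_eq/coef_norm. Qed.

Record nlp := Nlp { nval : lpoly; _ : norm nval == nval }.
HB.instance Definition _ := [isSub for nval].
HB.instance Definition _ := [Choice of nlp by <:].

Definition embed (p : lpoly) : nlp := @Nlp (norm p) (norm_idem p).

Lemma nlp_inj (x y : nlp) : lpeq (nval x) (nval y) -> x = y.
Proof.
case: x y => [p Hp] [q Hq] /= E; apply: val_inj => /=.
by rewrite -(eqP Hp) -(eqP Hq); apply: norm_eq.
Qed.

Lemma nval_embed p : lpeq (nval (embed p)) p.
Proof. exact: coef_norm. Qed.

Lemma embed_eq p q : lpeq p q -> embed p = embed q.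
Proof. by move=> E; apply: nlp_inj => w; rewrite !nval_embed. Qed.

Lemma embed_val x : embed (nval x) = x.
Proof. by apply: nlp_inj; apply: nval_embed. Qed.

Definition nadd (x y : nlp) := embed (nval x ++ nval y).
Definition nopp (x : nlp) := embed (lneg (nval x)).
Definition nzero := embed [::].
Definition nmul (x y : nlp) := embed (lmul (nval x) (nval y)).
Definition none := embed lone.

Lemma n_addA : associative nadd.
Proof. by move=> x y z; apply: nlp_inj => w; rewrite !nval_embed !coef_cat !nval_embed !coef_cat addrA. Qed.
Lemma n_addC : commutative nadd.
Proof. by move=> x y; apply: nlp_inj => w; rewrite !nval_embed !coef_cat addrC. Qed.
Lemma n_add0 : left_id nzero nadd.
Proof. by move=> x; apply: nlp_inj => w; rewrite !nval_embed !coef_cat nval_embed coef_nil add0r. Qed.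
Lemma n_addN : left_inverse nzero nopp nadd.
Proof. by move=> x; apply: nlp_inj => w; rewrite !nval_embed !coef_cat nval_embed coef_lneg coef_nil addNr. Qed.
Lemma n_mulA : associative nmul.
Proof.
move=> x y z; apply: nlp_inj; rewrite /nmul.
apply: lpeq_trans (nval_embed _) _; apply: lpeq_sym; apply: lpeq_trans (nval_embed _) _.
apply: lpeq_trans (lmul_congr_l _ (nval_embed _)) _.
apply: lpeq_trans (lmul_assoc _ _ _) _.
apply: lmul_congr_r; apply: lpeq_sym; exact: nval_embed.
Qed.
Lemma n_mul1 : left_id none nmul.
Proof.
move=> x; apply: nlp_inj; rewrite /nmul.
apply: lpeq_trans (nval_embed _) _.
apply: lpeq_trans (lmul_congr_l _ (nval_embed _)) _; exact: lmul1.
Qed.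
Lemma n_mulr1 : right_id none nmul.
Proof.
move=> x; apply: nlp_inj; rewrite /nmul.
apply: lpeq_trans (nval_embed _) _.
apply: lpeq_trans (lmul_congr_r _ (nval_embed _)) _; exact: lmulr1.
Qed.
Lemma n_mulDl : left_distributive nmul nadd.
Proof.
move=> x y z; apply: nlp_inj; rewrite /nmul /nadd.
apply: lpeq_trans (nval_embed _) _.
apply: lpeq_trans (lmul_congr_l _ (nval_embed _)) _.
apply: lpeq_trans (lmul_addl _ _ _) _.
apply: lpeq_sym; apply: lpeq_trans (nval_embed _) _.
by apply: ladd_congr; apply: nval_embed.
Qed.
Lemma n_mulDr : right_distributive nmul nadd.
Proof.
move=> x y z; apply: nlp_inj; rewrite /nmul /nadd.
apply: lpeq_trans (nval_embed _) _.
apply: lpeq_trans (lmul_congr_r _ (nval_embed _)) _.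
apply: lpeq_trans (lmul_addr _ _ _) _.
apply: lpeq_sym; apply: lpeq_trans (nval_embed _) _.
by apply: ladd_congr; apply: nval_embed.
Qed.

HB.instance Definition _ := GRing.isPzRing.Build nlp
  n_addA n_addC n_add0 n_addN n_mulA n_mul1 n_mulr1 n_mulDl n_mulDr.

Lemma embed_add p q : embed (p ++ q) = embed p + embed q.
Proof.
apply: nlp_inj => w; rewrite /= /nadd !nval_embed !coef_cat !nval_embed //.
Qed.
Lemma embed_mul p q : embed (lmul p q) = embed p * embed q.
Proof.
apply: embed_eq; apply: lpeq_sym; exact: lmul_congr (nval_embed _) (nval_embed _).
Qed.
Lemma embed_opp p : embed (lneg p) = - embed p.
Proof. by apply: nlp_inj => w; rewrite /= /nopp !nval_embed !coef_lneg nval_embed. Qed.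
Lemma embed_one : embed lone = 1.
Proof. by []. Qed.
Lemma embed_zero : embed [::] = 0.
Proof. by []. Qed.
Fixpoint pw (h e : nat) (p : seq bool) : option word :=
  match p with
  | [::] => if h == e then Some [::] else None
  | true :: p' => if (h < 3)%N then pw h.+1 e p' else None
  | false :: p' =>
      if h == 0%N then None
      else match pw h.-1 e p' with
           | Some u => Some (ywt h ++ u)
           | None => None
           end
  end.

Lemma pathw_pw h p : pathw h p = pw h 0 p.
Proof.
elim: p h => [|[] p IH] h //=; first by rewrite IH.
by rewrite IH.
Qed.

Fixpoint bseqs (m : nat) : seq (seq bool) :=
  match m with
  | 0 => [:: [::]]
  | m'.+1 => [seq true :: p | p <- bseqs m'] ++ [seq false :: p | p <- bseqs m']
  end.

Lemma inj_cons (x : bool) : injective (cons x).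
Proof. by move=> a b /(congr1 behead). Qed.

Lemma notin_consmap (x y : bool) p s : x != y -> (x :: p \in [seq y :: q | q <- s]) = false.
Proof. by move=> H; apply/negP => /mapP [q _ [E _]]; rewrite E eqxx in H. Qed.

Lemma nil_consmap (y : bool) s : ([::] \in [seq y :: q | q <- s]) = false.
Proof. by apply/negP => /mapP [q _]. Qed.

Lemma mem_bseqs m p : (p \in bseqs m) = (size p == m).
Proof.
elim: m p => [|m IH] p; first by case: p.
case: p => [|b p] /=; first by rewrite mem_cat !nil_consmap.
rewrite mem_cat eqSS; case: b.
  by rewrite (mem_map (@inj_cons _)) IH notin_consmap ?orbF.
by rewrite (mem_map (@inj_cons _)) IH notin_consmap.
Qed.

Lemma uniq_bseqs m : uniq (bseqs m).
Proof.
elim: m => [|m IH] //=; rewrite cat_uniq !map_inj_uniq ?IH; try exact: inj_cons.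
rewrite /= andbT; apply/hasPn => p /mapP [q _ ->]; by rewrite /= notin_consmap.
Qed.

Definition S (h e m : nat) : lpoly := [seq (1, u) | u <- pmap (pw h e) (bseqs m)].

Definition okp h e w (p : seq bool) :=
  if pw h e p is Some u then reduce u == w else false.

Lemma coef_S h e m w : coef (S h e m) w = (count (okp h e w) (bseqs m))%:R.
Proof.
rewrite /S; elim: (bseqs m) => [|p s IH]; first by rewrite coef_nil.
rewrite /= /okp; case: (pw h e p) => [u|] //=.
by rewrite coef_cons IH /=; case: ifP => _; rewrite natrD // add0r.
Qed.

Lemma pmap_consmap (f : seq bool -> option word) x s :
  pmap f [seq x :: p | p <- s] = pmap (fun p => f (x :: p)) s.
Proof. by elim: s => [|p s IH] //=; rewrite IH. Qed.

Lemma pmap_up h e s :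
  pmap (fun p => pw h e (true :: p)) s = if (h < 3)%N then pmap (pw h.+1 e) s else [::].
Proof.
rewrite (@eq_pmap _ _ _ (fun p => if (h < 3)%N then pw h.+1 e p else None)) //.
case: ifP => _; first by [].
by elim: s.
Qed.

Lemma map_down h e s :
  lpeq [seq (1, u) | u <- pmap (fun p => pw h e (false :: p)) s]
       (if h == 0%N then [::] else lmul (lmono (ywt h)) [seq (1, u) | u <- pmap (pw h.-1 e) s]).
Proof.
rewrite (@eq_pmap _ _ _ (fun p => if h == 0%N then None else
   match pw h.-1 e p with Some u => Some (ywt h ++ u) | None => None end)) //.
case: eqP => _; first by elim: s.
elim: s => [|p s IH] //=.
case: (pw h.-1 e p) => [u|] //= w.
by rewrite !coef_cons IH mulr1.
Qed.

Lemma S_step h e m :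
  lpeq (S h e m.+1)
       (ladd (if (h < 3)%N then S h.+1 e m else [::])
             (if h == 0%N then [::] else lmul (lmono (ywt h)) (S h.-1 e m))).
Proof.
rewrite /S /= pmap_cat !pmap_consmap map_cat /ladd pmap_up.
apply: ladd_congr; first by case: ifP.
exact: map_down.
Qed.
Fixpoint downs (h : nat) (p : seq bool) : seq nat :=
  match p with
  | [::] => [::]
  | true :: p' => downs h.+1 p'
  | false :: p' => h :: downs h.-1 p'
  end.

Lemma pw_downs h e p u : pw h e p = Some u -> u = flatten (map ywt (downs h p)).
Proof.
elim: p h u => [|[] p IH] h u /=.
- by case: eqP => // _ [<-].
- by case: ifP => // _; apply: IH.
- case: eqP => // _; case E: (pw h.-1 e p) => [v|] // [<-].
  by rewrite (IH _ _ E).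
Qed.

Definition okl (i : nat) := (0 < i <= 3)%N.

Lemma pw_labels h e p u : (h <= 3)%N -> pw h e p = Some u -> all okl (downs h p).
Proof.
elim: p h u => [|[] p IH] h u //= Hh.
- by case: ifP => // H; apply: IH.
- case: eqP => // H0; case E: (pw h.-1 e p) => [v|] // _.
  rewrite /okl Hh andbT lt0n; apply/andP; split; first by apply/eqP.
  apply: (IH _ _ _ E); exact: leq_trans (leq_pred h) Hh.
Qed.

Lemma downs_head k r d s : downs k r = d :: s -> (k <= d)%N.
Proof.
elim: r k => [|[] r IH] k //=.
- by move=> /IH; apply: ltnW.
- by case=> ->.
Qed.

Lemma pw_nodown h e q u : pw h e q = Some u -> downs h q = [::] -> e = (h + size q)%N.
Proof.
elim: q h u => [|[] q IH] h u /=.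
- by case: eqP => // -> _ _; rewrite addn0.
- case: ifP => // _ Hq Hd; rewrite (IH _ _ Hq Hd); by rewrite addSnnS.
- by case: eqP => //.
Qed.

Lemma pw_up h e p u : pw h e (true :: p) = Some u -> pw h.+1 e p = Some u.
Proof. by rewrite /=; case: ifP. Qed.

Lemma pw_down h e p u : pw h e (false :: p) = Some u -> exists u', pw h.-1 e p = Some u'.
Proof. by rewrite /=; case: eqP => // _; case: (pw h.-1 e p) => [v|] // _; exists v. Qed.

Lemma downs_inj h e p q u v : pw h e p = Some u -> pw h e q = Some v ->
  downs h p = downs h q -> p = q.
Proof.
have Hnil : forall h p u, pw h e p = Some u -> pw h e [::] <> None -> downs h p = [::] -> p = [::].
  move=> h0 p0 u0 H1 H2 H3; have := pw_nodown H1 H3.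
  by move: H2 => /=; case: eqP => // -> _ /eqP; rewrite -{1}(addn0 e) eqn_add2l eq_sym size_eq0 => /eqP.
elim: p h q u v => [|b p IH] h q u v Hp Hq Hd.
  by apply/esym/(Hnil _ _ _ Hq) => //; rewrite Hp.
case: q Hq Hd => [|c q] Hq Hd.
  by apply: (Hnil _ _ _ Hp) => //; rewrite Hq.
move: Hp Hq Hd; case: b; case: c => Hp Hq /= Hd.
- by rewrite (IH _ _ _ _ (pw_up Hp) (pw_up Hq) Hd).
- by have := downs_head Hd; rewrite ltnn.
- by have := downs_head (esym Hd); rewrite ltnn.
- have [u1 E1] := pw_down Hp; have [v1 E2] := pw_down Hq.
  case: Hd => Hd; by rewrite (IH _ _ _ _ E1 E2 Hd).
Qed.

Definition W (s : seq nat) : word := reduce (flatten (map ywt s)).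

Lemma Wcons i s : W (i :: s) = reduce (ywt i ++ W s).
Proof. by rewrite /W /= reduce_catr. Qed.

Lemma W_red s : redw (W s).
Proof. exact: reduce_red. Qed.

Definition pre (i : nat) : word :=
  match i with 1 => [:: Ly; Ly; Lxi] | 2 => [:: Lxi] | _ => [:: Lx] end.

Lemma ywt_pre i : okl i -> ywt i = pre i ++ [:: Lyi].
Proof. by case: i => [|[|[|[|i]]]]. Qed.

Lemma Wform i s : all okl (i :: s) -> exists r, W (i :: s) = pre i ++ r.
Proof.
elim: s i => [|j s IH] i /=.
  rewrite andbT => Hi; exists [:: Lyi]; rewrite /W /= cats0.
  by case: i Hi => [|[|[|[|i]]]].
move=> /andP [Hi /andP [Hj Hs]].
have [r Hr] := IH j (introT andP (conj Hj Hs)).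
have HR := W_red (j :: s); rewrite Hr in HR.
rewrite Wcons Hr (ywt_pre Hi) -catA /=.
case: j Hj Hr HR => [|[|[|[|j]]]] // Hj Hr HR.
- exists [:: Ly, Lxi & r].
  have := reduce_cancel (pre i) Lyi [:: Ly, Lxi & r]; rewrite /= => ->.
  apply: reduce_id; move: HR; rewrite /redw /= => HR.
  by case: i Hi => [|[|[|[|i]]]] //= _; rewrite HR.
- exists (Lyi :: pre 2 ++ r); apply: reduce_id; move: HR; rewrite /redw /=.
  by case: i Hi => [|[|[|[|i]]]] //= _ ->.
- exists (Lyi :: pre 3 ++ r); apply: reduce_id; move: HR; rewrite /redw /=.
  by case: i Hi => [|[|[|[|i]]]] //= _ ->.
Qed.

Lemma W_inj s t : all okl s -> all okl t -> W s = W t -> s = t.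
Proof.
elim: s t => [|i s IH] [|j t] //.
- move=> _ Ht; have [r Hr] := Wform Ht; rewrite Hr.
  by case: j {Ht Hr} => [|[|[|[|j]]]].
- move=> Hs _; have [r Hr] := Wform Hs; rewrite Hr.
  by case: i {Hs Hr} => [|[|[|[|i]]]].
move=> Hs Ht E.
have Eij : i = j.
  have [r1 H1] := Wform Hs; have [r2 H2] := Wform Ht.
  move: E; rewrite H1 H2.
  move: Hs Ht => /andP [Hi _] /andP [Hj _].
  by case: i Hi {H1} => [|[|[|[|i]]]] //; case: j Hj {H2} => [|[|[|[|j]]]].
subst j; move: Hs Ht => /andP [Hi Hs] /andP [_ Ht].
congr (_ :: _); apply: IH => //.
rewrite !Wcons in E.
have := congr1 (fun x => reduce (winv (ywt i) ++ x)) E.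
by rewrite /= !reduce_catr !reduce_invl !reduceK.
Qed.

Lemma path_inj h e p q u v : (h <= 3)%N -> pw h e p = Some u -> pw h e q = Some v ->
  reduce u = reduce v -> p = q.
Proof.
move=> Hh Hp Hq E.
apply: (downs_inj Hp Hq); apply: W_inj; [exact: (pw_labels Hh Hp) | exact: (pw_labels Hh Hq) |].
by move: E; rewrite (pw_downs Hp) (pw_downs Hq).
Qed.

Lemma count_le1 (s : seq (seq bool)) (P : pred (seq bool)) :
  uniq s -> (forall x y, P x -> P y -> x = y) -> (count P s <= 1)%N.
Proof.
elim: s => [|x s IH] //= /andP [Hx Us] H.
case: (boolP (P x)) => Px /=; last by rewrite add0n IH.
rewrite add1n ltnS leqn0 -(negbK (count _ _ == 0)) -lt0n -has_count.
apply/negP => /hasP [y ys Py]; have E := H _ _ Px Py; subst y.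
by rewrite ys in Hx.
Qed.

Lemma coef_S01 h e m w : (h <= 3)%N -> coef (S h e m) w = 0 \/ coef (S h e m) w = 1.
Proof.
move=> Hh; rewrite coef_S.
have : (count (okp h e w) (bseqs m) <= 1)%N.
  apply: count_le1; first exact: uniq_bseqs.
  move=> p q; rewrite /okp.
  case Ep: (pw h e p) => [u|] //; case Eq: (pw h e q) => [v|] // /eqP Hu /eqP Hv.
  by apply: (path_inj Hh Ep Eq); rewrite Hu Hv.
by case: (count _ _) => [|[|]] //; [left | right].
Qed.

Lemma coef_S_path h e m w : (h <= 3)%N -> coef (S h e m) w != 0 ->
  exists! p : seq bool, size p = m /\ exists u, pw h e p = Some u /\ reduce u = w.
Proof.
move=> Hh; rewrite coef_S pnatr_eq0 -lt0n -has_count => /hasP [p Hp Hok].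
exists p; split.
  split; first by move: Hp; rewrite mem_bseqs => /eqP.
  by move: Hok; rewrite /okp; case: (pw h e p) => [u|] // /eqP <-; exists u.
move=> q [_ [v [Hq Hv]]].
move: Hok; rewrite /okp; case Ep: (pw h e p) => [u|] // /eqP Hu.
by apply: (path_inj Hh Ep Hq); rewrite Hu Hv.
Qed.
Lemma int_ind2 (P : int -> Prop) :
  P 0 -> (forall n, P n -> P (n + 1)) -> (forall n, P n -> P (n - 1)) -> forall n, P n.
Proof.
move=> P0 Hu Hd [k|k].
  elim: k => [|k IH] //; have := Hu _ IH; by rewrite -[(k.+1)%N]addn1 PoszD.
elim: k => [|k IH]; first by have := Hd _ P0; rewrite sub0r.
have := Hd _ IH; congr P.
by rewrite !NegzE -opprD; congr (- _); rewrite -[(k.+2)%N]addn1 PoszD.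
Qed.

Lemma two_step_a (Rr : pzRingType) (a b : nat -> Rr) y1 y2 y3 :
  (forall n, a n.+1 = b n + y1 * a n) ->
  (forall n, b n.+1 = y3 * b n + y2 * (b n + y1 * a n)) ->
  forall n, a n.+2 = (y1 + y2 + y3) * a n.+1 - y3 * y1 * a n.
Proof.
move=> Ha Hb n.
have Hbn : b n = a n.+1 - y1 * a n by rewrite Ha addrK.
rewrite Ha Hb -Ha Hbn mulrBr !mulrA !mulrDl.
rewrite addrC addrA addrC !addrA; congr (_ + _ - _); exact: addrC.
Qed.

Lemma hlp3 (V : zmodType) (x y z : V) : x + (y + z) - x - y = z.
Proof. by rewrite [x + _]addrC addrK [y + _]addrC addrK. Qed.

Lemma two_step_b (Rr : pzRingType) (a b : nat -> Rr) y1 y2 y3 z2 :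
  z2 * y2 = 1 ->
  (forall n, a n.+1 = b n + y1 * a n) ->
  (forall n, b n.+1 = y3 * b n + y2 * (b n + y1 * a n)) ->
  forall n, b n.+2 = (y2 + y3 + y2 * y1 * z2) * b n.+1 - y2 * y1 * z2 * y3 * b n.
Proof.
move=> Hz Ha Hb n.
have H1 : y1 * a n = z2 * (b n.+1 - y3 * b n - y2 * b n).
  by rewrite Hb [y2 * (_ + _)]mulrDr hlp3 mulrA Hz mul1r.
rewrite {1}Hb [y2 * (_ + _)]mulrDr (Ha n) [y1 * (_ + _)]mulrDr H1 mulrDr.
rewrite !mulrBr !mulrA -[y2 * y1 * z2 * y2]mulrA Hz mulr1 !mulrDl.
set u := y3 * b n.+1; set v := y2 * b n.+1; set w := y2 * y1 * b n.
set x := y2 * y1 * z2 * b n.+1; set t := y2 * y1 * z2 * y3 * b n.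
by rewrite [w + _]addrC subrK addrA [u + v]addrC !addrA.
Qed.

Lemma lin3 (V : zmodType) (a b c d e f : V) :
  (a - b + c) - (d - e + f) = (a - d) - (b - e) + (c - f).
Proof.
rewrite [- (_ + f)]opprD addrACA; congr (_ + _).
by rewrite !opprD !opprK addrACA.
Qed.

Lemma main_alg (Rr : pzRingType) (Rg : int -> Rr) (K K' C Ci : Rr) :
  Ci * C = 1 -> K' * C = K ->
  (forall n, Rg (n + 1) = K * Rg n - C * Rg (n - 1)) ->
  Rg 1 - Rg 0 * K' + Rg (-1) * Ci = 0 ->
  Rg 2 - Rg 1 * K' + Rg 0 * Ci = 0 ->
  Rg 1 * C * Rg (-1) = Rg 0 * Rg 0 + 1 ->
  forall n, Rg (n + 1) * C * Rg (n - 1) = Rg n * Rg n + 1.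
Proof.
move=> HCi HK LR E0 E1 D0.
pose E n := Rg (n + 1) - Rg n * K' + Rg (n - 1) * Ci.
have LRE : forall n, E (n + 1) = K * E n - C * E (n - 1).
  move=> n; rewrite /E addrK subrK !mulrDr !mulrN lin3.
  have L1 := LR (n + 1); rewrite addrK in L1.
  have L0 := LR n.
  have Lm := LR (n - 1); rewrite subrK in Lm.
  rewrite L1; congr (_ - _ + _).
    by rewrite L0 mulrBl !mulrA.
  by rewrite Lm mulrBl !mulrA.
have Ez : forall n, E n = 0 /\ E (n + 1) = 0.
  apply: int_ind2.
  - by split; rewrite /E ?add0r ?sub0r.
  - move=> n [H0 H1]; split => //; rewrite LRE addrK H1 H0 !mulr0 subrr //.
  - move=> n [H0 H1]; split; last by rewrite subrK.
    have : C * E (n - 1) = 0.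
      have := LRE n; rewrite H0 H1 mulr0 sub0r => /esym/eqP.
      by rewrite oppr_eq0 => /eqP.
    by move=> H; rewrite -[E _]mul1r -HCi -mulrA H mulr0.
have RR : forall n, Rg (n + 1) = Rg n * K' - Rg (n - 1) * Ci.
  move=> n; have [H _] := Ez n; move: H; rewrite /E => /eqP.
  by rewrite -addrA addr_eq0 opprD opprK addrC => /eqP.
pose D n := Rg (n + 1) * C * Rg (n - 1) - Rg n * Rg n.
have DS : forall n, D (n + 1) = D n.
  move=> n; rewrite /D addrK (RR (n + 1)) addrK mulrBl.
  rewrite -(mulrA _ K' C) HK -(mulrA _ Ci C) HCi mulr1 mulrBl -(mulrA _ K).
  have LR' : K * Rg n = Rg (n + 1) + C * Rg (n - 1) by rewrite LR subrK.
  rewrite LR' mulrDr mulrA.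
  set a := Rg (n + 1) * Rg (n + 1); set b := Rg (n + 1) * C * Rg (n - 1).
  by rewrite addrAC [a + b - a]addrAC subrr add0r.
have Dn : forall n, D n = 1.
  apply: int_ind2.
  - by rewrite /D add0r sub0r D0 addrAC subrr add0r.
  - by move=> n H; rewrite DS.
  - by move=> n H; rewrite -H -{2}(subrK 1 n) DS.
move=> n; have := Dn n; rewrite /D => /eqP; rewrite subr_eq => /eqP ->.
by rewrite addrC.
Qed.
Definition coefc (p : lpoly) (w : word) : int :=
  foldr (fun t acc => (if reduce t.2 == w then t.1 else 0) + acc) 0 p.

Lemma coefcE p w : coef p w = coefc p w.
Proof. by elim: p => [|t p IH]; rewrite ?coef_nil // coef_cons IH. Qed.

Definition lpeqb (p q : lpoly) : bool :=
  all (fun w => coefc p w == coefc q w) (supp p ++ supp q).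

Lemma lpeq_dec p q : lpeqb p q -> lpeq p q.
Proof.
move=> /allP H w; case: (boolP (w \in supp p ++ supp q)) => Hw.
  by rewrite !coefcE; apply/eqP/H.
move: Hw; rewrite mem_cat negb_or => /andP [H1 H2].
by rewrite !coef_supp.
Qed.

Definition Sg h e m := embed (S h e m).
Definition Yg i := embed (lmono (ywt i)).

Lemma Sg_step h e m : Sg h e m.+1 =
  (if (h < 3)%N then Sg h.+1 e m else 0) + (if h == 0%N then 0 else Yg h * Sg h.-1 e m).
Proof.
rewrite /Sg (embed_eq (S_step h e m)) embed_add.
by congr (_ + _); [case: ifP | case: ifP => _ //; rewrite embed_mul].
Qed.

Lemma Ha e n : Sg 0 e n.+1.*2 = Sg 2 e n.*2 + Yg 1 * Sg 0 e n.*2.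
Proof. by rewrite /= Sg_step /= Sg_step /= addr0. Qed.

Lemma Hb e n : Sg 2 e n.+1.*2 = Yg 3 * Sg 2 e n.*2 + Yg 2 * (Sg 2 e n.*2 + Yg 1 * Sg 0 e n.*2).
Proof. by rewrite /= Sg_step /= Sg_step Sg_step /= add0r. Qed.

Definition r0 := embed (lmono wR0).
Definition Cg := embed (lmono wC).
Definition Z2 := embed (lmono [:: Ly; Lx]).
Definition Kg := Yg 1 + Yg 2 + Yg 3.
Definition Kp := embed [:: (1, [:: Lyi; Lxi]); (1, [:: Ly; Lxi]); (1, [:: Lx; Lx; Lyi; Lxi])].
Definition Ci := embed (lmono [:: Ly; Lx; Lyi; Lxi]).

Inductive rexp :=
  RLeaf of lpoly | RAdd of rexp & rexp | RMul of rexp & rexp | ROpp of rexp | ROne | RZero.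

Fixpoint rint (e : rexp) : nlp :=
  match e with
  | RLeaf p => embed p
  | RAdd a b => rint a + rint b
  | RMul a b => rint a * rint b
  | ROpp a => - rint a
  | ROne => 1
  | RZero => 0
  end.

Fixpoint rraw (e : rexp) : lpoly :=
  match e with
  | RLeaf p => p
  | RAdd a b => rraw a ++ rraw b
  | RMul a b => lmul (rraw a) (rraw b)
  | ROpp a => lneg (rraw a)
  | ROne => lone
  | RZero => [::]
  end.

Lemma rint_raw e : rint e = embed (rraw e).
Proof.
elim: e => [p|a IHa b IHb|a IHa b IHb|a IHa||] //=.
- by rewrite embed_add IHa IHb.
- by rewrite embed_mul IHa IHb.
- by rewrite embed_opp IHa.
Qed.

Ltac reify t :=
  match t with
  | (?a + ?b)%R => let x := reify a in let y := reify b in constr:(RAdd x y)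
  | (?a * ?b)%R => let x := reify a in let y := reify b in constr:(RMul x y)
  | (- ?a)%R => let x := reify a in constr:(ROpp x)
  | 1%R => constr:(ROne)
  | 0%R => constr:(RZero)
  | embed ?p => constr:(RLeaf p)
  end.

Ltac conc :=
  rewrite /Kg /Cg /Z2 /Kp /Ci /r0 /Yg /Sg;
  match goal with |- ?l = ?r =>
    let el := reify l in let er := reify r in change (rint el = rint er) end;
  rewrite !rint_raw; apply: embed_eq; apply: lpeq_dec; vm_compute; reflexivity.

Lemma c2 : Yg 3 * Yg 1 = Cg. Proof. conc. Qed.
Lemma c5 : Z2 * Yg 2 = 1. Proof. conc. Qed.
Lemma c3 : Cg * r0 * (Yg 2 + Yg 3 + Yg 2 * Yg 1 * Z2) = Kg * r0. Proof. conc. Qed.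
Lemma c4 : Cg * r0 * (Yg 2 * Yg 1 * Z2 * Yg 3) = r0. Proof. conc. Qed.
Lemma c8a : Kp * Cg = Kg. Proof. conc. Qed.
Lemma c8b : Ci * Cg = 1. Proof. conc. Qed.
Lemma T0 e : Sg e e 0 = 1.
Proof. by rewrite /Sg /S /= eqxx. Qed.
Definition Rg (n : int) : nlp :=
  match n with
  | Posz k => Sg 0 0 k.*2 * r0
  | Negz k => r0 * Sg 2 2 k.+1.*2
  end.

Lemma HA n : Sg 0 0 n.+2.*2 = Kg * Sg 0 0 n.+1.*2 - Cg * Sg 0 0 n.*2.
Proof.
have := two_step_a (a := fun n => Sg 0 0 n.*2) (b := fun n => Sg 2 0 n.*2) (Ha 0) (Hb 0) n.
by rewrite /= c2.
Qed.

Lemma HB n : Sg 2 2 n.+2.*2 = (Yg 2 + Yg 3 + Yg 2 * Yg 1 * Z2) * Sg 2 2 n.+1.*2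
   - Yg 2 * Yg 1 * Z2 * Yg 3 * Sg 2 2 n.*2.
Proof.
exact: (two_step_b (a := fun n => Sg 0 2 n.*2) (b := fun n => Sg 2 2 n.*2) c5 (Ha 2) (Hb 2) n).
Qed.

Lemma c4' : Cg * r0 * Yg 2 * Yg 1 * Z2 * Yg 3 = r0.
Proof. by rewrite -[RHS]c4 !mulrA. Qed.

Lemma NegL m : r0 * Sg 2 2 m.*2 =
  Kg * (r0 * Sg 2 2 m.+1.*2) - Cg * (r0 * Sg 2 2 m.+2.*2).
Proof.
rewrite HB mulrBr mulrBr !mulrA c3 c4' opprB addrC.
by rewrite subrK.
Qed.

Lemma LR n : Rg (n + 1) = Kg * Rg n - Cg * Rg (n - 1).
Proof.
case: n => [[|k]|k].
- have -> : (Posz 0 + 1) = Posz 1 by [].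
  have -> : (Posz 0 - 1) = Negz 0 by [].
  rewrite /=; conc.
- have -> : (Posz k.+1 + 1) = Posz k.+2 by lia.
  have -> : (Posz k.+1 - 1) = Posz k by lia.
  by rewrite /= HA mulrBl !mulrA.
- have -> : (Negz k - 1) = Negz k.+1 by rewrite !NegzE; lia.
  have -> : Rg (Negz k + 1) = r0 * Sg 2 2 k.*2.
    case: k => [|k]; first by rewrite /= T0 mul1r mulr1.
    by have -> : (Negz k.+1 + 1) = Negz k by rewrite !NegzE; lia.
  exact: NegL.
Qed.

Lemma E0 : Rg 1 - Rg 0 * Kp + Rg (-1) * Ci = 0.
Proof. rewrite /=; conc. Qed.
Lemma E1 : Rg 2 - Rg 1 * Kp + Rg 0 * Ci = 0.
Proof. rewrite /=; conc. Qed.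
Lemma D0 : Rg 1 * Cg * Rg (-1) = Rg 0 * Rg 0 + 1.
Proof. rewrite /=; conc. Qed.

Lemma Rg_rec n : Rg (n + 1) * Cg * Rg (n - 1) = Rg n * Rg n + 1.
Proof. exact: (main_alg c8b c8a LR E0 E1 D0). Qed.
Lemma nval_mul x y : lpeq (nval (x * y)) (lmul (nval x) (nval y)).
Proof. exact: nval_embed. Qed.
Lemma nval_add x y : lpeq (nval (x + y)) (ladd (nval x) (nval y)).
Proof. exact: nval_embed. Qed.
Lemma nval_one : lpeq (nval 1) lone.
Proof. exact: nval_embed. Qed.

Lemma coef_mulmono p u w : redw w ->
  coef (lmul p (lmono u)) w = coef p (reduce (w ++ winv u)).
Proof.
move=> Hw; rewrite coef_lmul [RHS]/coef [RHS]big_mkcond; apply: eq_bigr => a _.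
rewrite big_cons big_nil addr0 /= mulr1.
suff -> : (reduce (a.2 ++ u) == w) = (reduce a.2 == reduce (w ++ winv u)) by [].
apply/eqP/eqP => E.
  rewrite -E reduce_catl -catA -reduce_catr.
  by rewrite (_ : reduce (u ++ winv u) = [::]) ?cats0 // -(cats0 (winv u)) reduce_invr.
rewrite -reduce_catl E reduce_catl -catA -reduce_catr reduce_invl0 cats0.
exact: reduce_id.
Qed.

Lemma coef_monomul p u w : redw w ->
  coef (lmul (lmono u) p) w = coef p (reduce (winv u ++ w)).
Proof.
move=> Hw; rewrite coef_lmul big_cons big_nil addr0 [RHS]/coef [RHS]big_mkcond; apply: eq_bigr => b _.
rewrite /= mul1r.
suff -> : (reduce (u ++ b.2) == w) = (reduce b.2 == reduce (winv u ++ w)) by [].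
apply/eqP/eqP => E.
  by rewrite -E reduce_catr reduce_invl.
by rewrite -reduce_catr E reduce_catr reduce_invr reduce_id.
Qed.

Lemma nvalRpos k : lpeq (nval (Rg (Posz k))) (lmul (S 0 0 k.*2) (lmono wR0)).
Proof.
apply: lpeq_trans (nval_mul _ _) _; apply: lmul_congr; exact: nval_embed.
Qed.

Lemma nvalRneg k : lpeq (nval (Rg (Negz k))) (lmul (lmono wR0) (S 2 2 k.+1.*2)).
Proof.
apply: lpeq_trans (nval_mul _ _) _; apply: lmul_congr; exact: nval_embed.
Qed.

Lemma exu_iff (T : Type) (P Q : T -> Prop) :
  (forall p, P p <-> Q p) -> (exists! p, P p) -> exists! p, Q p.
Proof.
move=> H [p [Hp Hu]]; exists p; split; first by apply/H.
by move=> q Hq; apply: Hu; apply/H.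
Qed.

Theorem theorem3p7 :
  exists R : int -> lpoly,
    [/\ lpeq (R 0) (lmono wR0),
        lpeq (R 1) (lmono wR1),
        (forall n : int,
            lpeq (lmul (lmul (R (n + 1)) (lmono wC)) (R (n - 1)))
                 (ladd (lmul (R n) (R n)) lone)),
        (forall (n : int) (w : word), coef (R n) w = 0 \/ coef (R n) w = 1)
      & (forall (n : nat) (w : word),
            coef (lmul (R (Posz n)) (lmono wR0inv)) w != 0 ->
            exists! p : seq bool,
              size p = (2 * n)%N /\
              exists u : word, pathw 0 p = Some u /\ reduce u = w)].
Proof.
exists (fun n => nval (Rg n)); split.
- apply: lpeq_trans (nvalRpos 0) _.
  apply: lpeq_dec; vm_compute; reflexivity.
- apply: lpeq_trans (nvalRpos 1) _.
  apply: lpeq_dec; vm_compute; reflexivity.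
- move=> n.
  apply: lpeq_trans (lmul_congr (lmul_congr (lpeq_refl _) (lpeq_sym (nval_embed _))) (lpeq_refl _)) _.
  apply: lpeq_trans (lmul_congr_l _ (lpeq_sym (nval_mul _ _))) _.
  apply: lpeq_trans (lpeq_sym (nval_mul _ _)) _.
  rewrite -/Cg Rg_rec.
  apply: lpeq_trans (nval_add _ _) _.
  exact: ladd_congr (nval_mul _ _) nval_one.
- move=> n w; case: (boolP (redw w)) => Hw; last by left; apply: coef_notred.
  case: n => k.
    by rewrite (nvalRpos k) coef_mulmono //; apply: coef_S01.
  by rewrite (nvalRneg k) coef_monomul //; apply: coef_S01.
- move=> n w.
  have E : lpeq (lmul (nval (Rg (Posz n))) (lmono wR0inv)) (S 0 0 n.*2).
    apply: lpeq_trans (lmul_congr_l _ (nvalRpos n)) _.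
    apply: lpeq_trans (lmul_assoc _ _ _) _.
    apply: lpeq_trans (lmul_congr_r _ (_ : lpeq _ lone)) _; last exact: lmulr1.
    apply: lpeq_dec; vm_compute; reflexivity.
  rewrite E => /(@coef_S_path 0 0 _ _ (leq0n 3)).
  apply: exu_iff => p; rewrite mul2n pathw_pw; by [].
Qed.
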